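(* Let $\Omega\subset\mathbb R^d$ be a bounded open set, $L>0$, $n\in\mathbb Z_+$, $X=\overline\Omega\times[-L,L]^n$, and let $\Gamma:\mathcal P(X)\times X\to X$ satisfy: (i) if $\mu_j\to\mu$ in $\mathcal P(X)$ then $\sup_{(x,y)\in X}|\Gamma(\mu_j,(x,y))-\Gamma(\mu,(x,y))|\to0$; (ii) there is $C_0>0$ such that $\sup_{\mu\in\mathcal P(X)}|\Gamma(\mu,(x_1,y_1))-\Gamma(\mu,(x_2,y_2))|\le C_0(|x_1-x_2|+|y_1-y_2|)$ for all $(x_1,y_1),(x_2,y_2)\in X$. Then $G:\mathcal P(X)\to\mathcal P(X)$, $G(\mu)=\Gamma(\mu,\cdot)_\#\mu$, is continuous.
   Context: $\mathcal P(X)$: Borel probability measures on $X$ with the 1-Wasserstein metric $W_1$; $F_\#$ denotes pushforward. *)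

(* Defs.v *)
From HB Require Import structures.
From mathcomp Require Import all_boot all_order all_algebra.
From mathcomp Require Import all_classical all_reals all_analysis.
Set Implicit Arguments. Unset Strict Implicit. Unset Printing Implicit Defensive.
Import Order.TTheory GRing.Theory Num.Theory.
Import numFieldNormedType.Exports.
Local Open Scope classical_set_scope.
Local Open Scope ring_scope.

Definition Pt (R : realType) (d n : nat) := ('rV[R]_d * 'rV[R]_n)%type.

Definition BPt (R : realType) (d n : nat) : measurableType _ :=
  g_sigma_algebraType (@open ('rV[R]_d * 'rV[R]_n)%type).

Definition eucl_norm (R : realType) (k : nat) (x : 'rV[R]_k) : R :=
  Num.sqrt (\sum_(i < k) x ord0 i ^+ 2).

Definition eucl_dist (R : realType) (d n : nat) (p q : Pt R d n) : R :=
  Num.sqrt (\sum_(i < d) (p.1 ord0 i - q.1 ord0 i) ^+ 2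
          + \sum_(i < n) (p.2 ord0 i - q.2 ord0 i) ^+ 2).

Definition Xset (R : realType) (d n : nat) (Omega : set 'rV[R]_d) (L : R)
  : set (Pt R d n) :=
  closure Omega `*` [set y : 'rV[R]_n | forall i, - L <= y ord0 i <= L].

Definition coupling (R : realType) (d n : nat)
  (mu nu : set (BPt R d n) -> \bar R)
  (pi : probability (BPt R d n * BPt R d n)%type R) : Prop :=
  (forall A : set (BPt R d n), measurable A -> pi (fst @^-1` A) = mu A) /\
  (forall A : set (BPt R d n), measurable A -> pi (snd @^-1` A) = nu A).

Definition W1 (R : realType) (d n : nat) (mu nu : set (BPt R d n) -> \bar R)
  : \bar R :=
  ereal_inf [set (\int[pi]_z ((eucl_dist (z.1 : Pt R d n) (z.2 : Pt R d n))%:E))%E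
            | pi in [set pi | coupling mu nu pi]].

(* Pushforward mu restricted to X by f : (f_# mu)(A) = mu (X ∩ f^{-1} A).
   For mu concentrated on X this is exactly f_# mu, and it only depends on
   f restricted to X. *)
Definition pushforward_on (R : realType) (d n : nat) (X : set (Pt R d n))
  (mu : set (BPt R d n) -> \bar R) (f : Pt R d n -> Pt R d n)
  : set (BPt R d n) -> \bar R :=
  fun A => mu (X `&` f @^-1` A).

(* mu belongs to P(X): Borel probability measure concentrated on X. *)
Definition inPX (R : realType) (d n : nat) (X : set (Pt R d n))
  (mu : probability (BPt R d n) R) : Prop := mu X = 1%E.

(* Main.v *)
Require Import Defs.
From HB Require Import structures.
From mathcomp Require Import all_boot all_order all_algebra.
From mathcomp Require Import all_classical all_reals all_analysis.
From mathcomp Require Import measurable_realfun.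
From mathcomp Require Import ring lra.
Import Order.TTheory GRing.Theory Num.Theory.
Import numFieldNormedType.Exports.
Set Implicit Arguments. Unset Strict Implicit. Unset Printing Implicit Defensive.
Local Open Scope classical_set_scope.
Local Open Scope ring_scope.
Section Ineq.
Variable R : realType.

Lemma sum_sq_le k (x : 'I_k -> R) :
  \sum_(i < k) x i ^+ 2 <= (\sum_(i < k) `|x i|) ^+ 2.
Proof.
elim: k x => [|k IH] x; first by rewrite !big_ord0 expr0n.
rewrite !big_ord_recr /=.
have h := IH (fun i => x (widen_ord (leqnSn k) i)).
have s0 : 0 <= \sum_(i < k) `|x (widen_ord (leqnSn k) i)| by apply: sumr_ge0.
have a0 : 0 <= `|x ord_max| by [].
rewrite -(real_normK (num_real (x ord_max))).
nra.
Qed.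

Lemma sqrt_sum_sq_le k (x : 'I_k -> R) :
  Num.sqrt (\sum_(i < k) x i ^+ 2) <= \sum_(i < k) `|x i|.
Proof.
have s0 : 0 <= \sum_(i < k) `|x i| by apply: sumr_ge0.
rewrite -(ger0_norm s0) -sqrtr_sqr ler_sqrt ?exprn_ge0 ?normr_ge0 //.
exact: sum_sq_le.
Qed.

Lemma coord_le_sqrt k (x : 'I_k -> R) (A : R) j : 0 <= A ->
  `|x j| <= Num.sqrt (\sum_(i < k) x i ^+ 2 + A).
Proof.
move=> A0; rewrite -sqrtr_sqr ler_sqrt; last first.
  by apply: addr_ge0 => //; apply: sumr_ge0 => i _; exact: sqr_ge0.
rewrite (bigD1 j) //= -addrA lerDl; apply: addr_ge0 => //.
by apply: sumr_ge0 => i _; exact: sqr_ge0.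
Qed.
End Ineq.
Section Dist.
Variables (R : realType) (d n : nat).
Local Notation P := (Pt R d n).
Definition l1 (p q : P) : R :=
  \sum_(i < d) `|p.1 ord0 i - q.1 ord0 i| + \sum_(i < n) `|p.2 ord0 i - q.2 ord0 i|.

Lemma ed_ge0 (p q : P) : 0 <= eucl_dist p q.
Proof. exact: sqrtr_ge0. Qed.

Lemma ed_sym (p q : P) : eucl_dist p q = eucl_dist q p.
Proof.
rewrite /eucl_dist; congr (Num.sqrt (_ + _)); apply: eq_bigr => i _;
  by rewrite -sqrrN opprB.
Qed.

Lemma ed_c1 (p q : P) j : `|p.1 ord0 j - q.1 ord0 j| <= eucl_dist p q.
Proof.
apply: (coord_le_sqrt (fun i => p.1 ord0 i - q.1 ord0 i)).
by apply: sumr_ge0 => i _; exact: sqr_ge0.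
Qed.

Lemma ed_c2 (p q : P) j : `|p.2 ord0 j - q.2 ord0 j| <= eucl_dist p q.
Proof.
rewrite /eucl_dist [X in Num.sqrt X]addrC.
apply: (coord_le_sqrt (fun i => p.2 ord0 i - q.2 ord0 i)).
by apply: sumr_ge0 => i _; exact: sqr_ge0.
Qed.

Lemma ed_le_l1 (p q : P) : eucl_dist p q <= l1 p q.
Proof.
rewrite /eucl_dist /l1.
set A := \sum_(i < d) `|_|; set B := \sum_(i < n) `|_|.
have A0 : 0 <= A by apply: sumr_ge0.
have B0 : 0 <= B by apply: sumr_ge0.
have h1 := sum_sq_le (fun i => p.1 ord0 i - q.1 ord0 i).
have h2 := sum_sq_le (fun i => p.2 ord0 i - q.2 ord0 i).
have AB0 : 0 <= A + B by apply: addr_ge0.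
rewrite -(ger0_norm AB0) -sqrtr_sqr ler_sqrt ?sqr_ge0 //.
apply: le_trans (lerD h1 h2) _.
rewrite -/A -/B sqrrD lerD2r lerDl; exact: mulrn_wge0 (mulr_ge0 A0 B0).
Qed.

Lemma l1_le_ed (p q : P) : l1 p q <= (d + n)%:R * eucl_dist p q.
Proof.
rewrite /l1 natrD mulrDl.
apply: lerD.
  apply: le_trans (_ : \sum_(i < d) eucl_dist p q <= _).
    by apply: ler_sum => i _; exact: ed_c1.
  by rewrite sumr_const card_ord mulr_natl.
apply: le_trans (_ : \sum_(i < n) eucl_dist p q <= _).
  by apply: ler_sum => i _; exact: ed_c2.
by rewrite sumr_const card_ord mulr_natl.
Qed.

Lemma l1_triangle (p q r : P) : l1 p r <= l1 p q + l1 q r.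
Proof.
rewrite /l1 addrACA -!big_split /=.
apply: lerD; apply: ler_sum => i _; exact: ler_distD.
Qed.

Lemma ed_triangle (p q r : P) :
  eucl_dist p r <= (d + n)%:R * (eucl_dist p q + eucl_dist q r).
Proof.
apply: le_trans (ed_le_l1 p r) _.
apply: le_trans (l1_triangle p q r) _.
rewrite mulrDr; apply: lerD; exact: l1_le_ed.
Qed.

Lemma en1_le (p q : P) : eucl_norm (p.1 - q.1) <= eucl_dist p q.
Proof.
rewrite /eucl_norm /eucl_dist ler_sqrt; last first.
  by apply: addr_ge0; apply: sumr_ge0 => i _; exact: sqr_ge0.
rewrite (_ : \sum_(i < d) _ = \sum_(i < d) (p.1 ord0 i - q.1 ord0 i) ^+ 2); last first.
  by apply: eq_bigr => i _; rewrite !mxE.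
by rewrite lerDl; apply: sumr_ge0 => i _; exact: sqr_ge0.
Qed.

Lemma en2_le (p q : P) : eucl_norm (p.2 - q.2) <= eucl_dist p q.
Proof.
rewrite /eucl_norm /eucl_dist ler_sqrt; last first.
  by apply: addr_ge0; apply: sumr_ge0 => i _; exact: sqr_ge0.
rewrite (_ : \sum_(i < n) _ = \sum_(i < n) (p.2 ord0 i - q.2 ord0 i) ^+ 2); last first.
  by apply: eq_bigr => i _; rewrite !mxE.
by rewrite lerDr; apply: sumr_ge0 => i _; exact: sqr_ge0.
Qed.

Lemma ball_ed (p q : P) r : ball p r q -> eucl_dist p q <= (d + n)%:R * r.
Proof.
rewrite /ball /= /prod_ball /ball /= => -[[r0 h1] [_ h2]].
apply: le_trans (ed_le_l1 p q) _.
rewrite /l1 natrD mulrDl; apply: lerD.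
  apply: le_trans (_ : \sum_(i < d) r <= _); last by rewrite sumr_const card_ord mulr_natl.
  by apply: ler_sum => i _; have := h1 ord0 i; rewrite /ball /=; exact: ltW.
apply: le_trans (_ : \sum_(i < n) r <= _); last by rewrite sumr_const card_ord mulr_natl.
by apply: ler_sum => i _; have := h2 ord0 i; rewrite /ball /=; exact: ltW.
Qed.

Lemma ed_ball (p q : P) r : eucl_dist p q < r -> ball p r q.
Proof.
move=> h; have r0 : 0 < r by apply: le_lt_trans (ed_ge0 p q) h.
rewrite /ball /= /prod_ball /ball /=; split; split => // i j; rewrite (ord1 i) /ball /=.
  exact: le_lt_trans (ed_c1 p q j) h.
exact: le_lt_trans (ed_c2 p q j) h.
Qed.


End Dist.
Section Closed.
Variables (R : realType) (d n : nat).
Lemma box_closed (L : R) : closed [set y : 'rV[R]_n | forall i, - L <= y ord0 i <= L].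
Proof.
rewrite (_ : [set y : 'rV[R]_n | _] = \bigcap_(i in [set: 'I_n])
   ((fun y : 'rV[R]_n => y ord0 i) @^-1` ([set x : R | - L <= x] `&` [set x | x <= L]))).
  apply: closed_bigI => i _; apply: preimage_closed.
    by move=> y _; exact: coord_continuous.
  by apply: closedI; [exact: closed_ge|exact: closed_le].
apply/seteqP; split => y /=.
  by move=> h i _; have /andP[] := h i.
by move=> h i; have [] := h i I => -> ->.
Qed.

Lemma Xset_closed (Omega : set 'rV[R]_d) (L : R) : closed (@Xset R d n Omega L).
Proof.
have -> : @Xset R d n Omega L = fst @^-1` closure Omega `&`
    snd @^-1` [set y : 'rV[R]_n | forall i, - L <= y ord0 i <= L] by [].
apply: closedI; apply: preimage_closed.
- by move=> x _; exact: cvg_fst.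
- exact: closed_closure.
- by move=> x _; exact: cvg_snd.
- exact: box_closed.
Qed.
End Closed.
Section LipMeas.
Variables (R : realType) (d n : nat).
Local Notation P := (Pt R d n).
Local Notation T := (BPt R d n).

Lemma closed_meas (X : set P) : closed X -> measurable (X : set T).
Proof.
move=> cX; rewrite -(setCK X); apply: measurableC.
by apply: sub_sigma_algebra; exact: closed_openC.
Qed.

Lemma lip_meas (X : set P) (G : P -> P) (C : R) : closed X -> 0 <= C ->
  (forall p q, X p -> X q -> eucl_dist (G p) (G q) <= C * eucl_dist p q) ->
  measurable_fun (X : set T) (G : T -> T).
Proof.
move=> cX C0 lipG.
apply: (@measurability _ _ T T X G open erefl).
move=> _ [U oU <-].
pose K := C * (d + n)%:R + 1.
have K0 : 0 < K by rewrite /K ltr_pwDr // mulr_ge0.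
pose V := \bigcup_(pr in [set pr : P * R | X pr.1 /\ 0 < pr.2 /\
             ball (G pr.1) (K * pr.2) `<=` U]) ball pr.1 pr.2.
have -> : X `&` G @^-1` U = X `&` V.
  apply/seteqP; split => q [Xq Uq]; split => //.
    have /nbhs_ballP [e e0 sub] := oU _ Uq.
    exists (q, e / K) => /=; last exact: ballxx (divr_gt0 e0 K0).
    split => //; split; first exact: divr_gt0.
    by rewrite mulrC divfK // gt_eqF.
  case: Uq => -[p r] /= [Xp [r0 sub]] bq.
  apply: sub; apply: ed_ball.
  apply: le_lt_trans (lipG _ _ Xp Xq) _.
  apply: le_lt_trans (ler_wpM2l C0 (ball_ed bq)) _.
  rewrite /K mulrA mulrDl mul1r ltrDl //.
apply: measurableI; first exact: closed_meas.
apply: sub_sigma_algebra; apply: bigcup_open => i _; exact: ball_open.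
Qed.
End LipMeas.
Section S.
Variables (R : realType) (d n : nat).
Lemma open_meas (A : set (Pt R d n)) : open A -> measurable (A : set (BPt R d n)).
Proof. by move=> oA; apply: sub_sigma_algebra. Qed.

Lemma cont_meas (f : Pt R d n -> R) : continuous f ->
  measurable_fun [set: BPt R d n] (f : BPt R d n -> R).
Proof.
move=> cf; have := @measurability _ _ (BPt R d n) R setT f _ (measurable_realfun.RGenOpens.measurableE R).
move=> H; refine (H _).
move=> _ [_ [a [b ->] <-]]. apply: measurableI => //.
apply: open_meas. apply: (@open_comp _ R f); first by move=> x _; exact: cf.
exact: interval_open.
Qed.
End S.
Section S2.
Variables (R : realType) (d n : nat).
Lemma cont_c1 i : continuous (fun p : Pt R d n => p.1 ord0 i).
Proof. move=> p; exact: (@continuous_comp _ _ _ fst (fun M : 'rV[R]_d => M ord0 i) p cvg_fst (@coord_continuous _ _ _ _ _ _)). Qed.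
Lemma cont_c2 i : continuous (fun p : Pt R d n => p.2 ord0 i).
Proof. move=> p; exact: (@continuous_comp _ _ _ snd (fun M : 'rV[R]_n => M ord0 i) p cvg_snd (@coord_continuous _ _ _ _ _ _)). Qed.
End S2.
Arguments cont_c1 {R d n} i.
Arguments cont_c2 {R d n} i.
Arguments cont_meas {R d n f}.
Section S3.
Variables (R : realType) (d n : nat).
Local Notation T := (BPt R d n).
Lemma meas_ed : @measurable_fun _ _ (T * T)%type (\bar R) [set: (T * T)%type]
  (fun z : (T * T)%type => ((eucl_dist (z.1 : Pt R d n) (z.2 : Pt R d n))%:E : \bar R)).
Proof.
apply/measurable_EFinP; rewrite /eucl_dist.
apply: (measurableT_comp (continuous_measurable_fun (@sqrt_continuous R))).
apply: measurable_funD; apply: measurable_sum => i; apply: measurable_funX;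
  apply: measurable_funB.
- exact: (measurableT_comp (cont_meas (cont_c1 (R:=R) (n:=n) i)) measurable_fst).
- exact: (measurableT_comp (cont_meas (cont_c1 (R:=R) (n:=n) i)) measurable_snd).
- exact: (measurableT_comp (cont_meas (cont_c2 (R:=R) (d:=d) i)) measurable_fst).
- exact: (measurableT_comp (cont_meas (cont_c2 (R:=R) (d:=d) i)) measurable_snd).
Qed.

End S3.

Section Coup.
Variables (R : realType) (d n : nat).
Local Notation P := (Pt R d n).
Local Notation T := (BPt R d n).
Local Open Scope ereal_scope.

Lemma coupling_push (mu nu : set T -> \bar R) (pi : probability (T * T)%type R)
  (f g : T -> T) :
  coupling mu nu pi -> measurable_fun [set: T] f -> measurable_fun [set: T] g ->
  exists pi' : probability (T * T)%type R,
   coupling (pushforward mu f) (pushforward nu g) pi' /\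
   \int[pi']_z (eucl_dist (z.1 : P) (z.2 : P))%:E =
   \int[pi]_z (eucl_dist (f z.1 : P) (g z.2 : P))%:E.
Proof.
move=> [c1 c2] mf mg.
pose Phi := fun z : (T * T)%type => (f z.1, g z.2).
have mPhi : measurable_fun [set: (T * T)%type] Phi.
  apply: measurable_fun_pair.
    exact: measurableT_comp mf measurable_fst.
  exact: measurableT_comp mg measurable_snd.
pose Phim : {mfun (T * T)%type >-> (T * T)%type} :=
  HB.pack Phi (isMeasurableFun.Build _ _ _ _ _ mPhi).
exists (distribution pi Phim); split.
  split => A mA.
    transitivity (pi (fst @^-1` (f @^-1` A))); first by [].
    by apply: c1; rewrite -[X in measurable X]setTI; exact: mf.
  transitivity (pi (snd @^-1` (g @^-1` A))); first by [].
  by apply: c2; rewrite -[X in measurable X]setTI; exact: mg.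
rewrite ge0_integral_distribution //; last by move=> z; rewrite lee_fin ed_ge0.
exact: meas_ed.
Qed.
End Coup.
Section Ext.
Variables (R : realType) (d n : nat).
Local Notation P := (Pt R d n).
Local Notation T := (BPt R d n).
Local Open Scope ereal_scope.

Definition ext (X : set P) (G : P -> P) (p : P) : P :=
  if `[< X p >] then G p else p.

Lemma ext_pre (X : set P) (G : P -> P) (A : set P) :
  ext X G @^-1` A = (X `&` G @^-1` A) `|` (~` X `&` A).
Proof.
apply/seteqP; split => p; rewrite /ext /=.
  by case: asboolP => Xp h; [left|right].
by case: asboolP => Xp [[]|[]].
Qed.

Lemma ext_meas (X : set P) (G : P -> P) : closed X ->
  measurable_fun (X : set T) (G : T -> T) ->
  measurable_fun [set: T] (ext X G : T -> T).
Proof.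
move=> cX mG _ A mA; rewrite setTI ext_pre; apply: measurableU.
  exact: mG (closed_meas cX) A mA.
apply: measurableI => //; apply: measurableC; exact: closed_meas.
Qed.

Lemma ext_push (m : probability T R) (X : set P) (G : P -> P) : closed X ->
  m X = 1 -> measurable_fun (X : set T) (G : T -> T) ->
  forall A : set T, measurable A -> pushforward m (ext X G : T -> T) A = m (X `&` G @^-1` A).
Proof.
move=> cX mX mG A mA; rewrite /pushforward ext_pre measureU0 //.
- exact: mG (closed_meas cX) A mA.
- by apply: measurableI => //; apply: measurableC; exact: closed_meas.
apply/eqP; rewrite eq_le measure_ge0 andbT.
have <- : m (~` X) = 0 by rewrite probability_setC ?mX ?subee //; exact: closed_meas.
apply: le_measure; rewrite ?inE.
- by apply: measurableI => //; apply: measurableC; exact: closed_meas.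
- by apply: measurableC; exact: closed_meas.
exact: subIsetl.
Qed.

Lemma coupling_swap (mu nu : set T -> \bar R) (pi : probability (T * T)%type R) :
  coupling mu nu pi -> exists pi' : probability (T * T)%type R,
   coupling nu mu pi' /\
   \int[pi']_z (eucl_dist (z.1 : P) (z.2 : P))%:E =
   \int[pi]_z (eucl_dist (z.1 : P) (z.2 : P))%:E.
Proof.
move=> [c1 c2].
pose sw := fun z : (T * T)%type => (z.2, z.1).
have msw : measurable_fun [set: (T * T)%type] sw.
  exact: measurable_fun_pair measurable_snd measurable_fst.
pose Sw : {mfun (T * T)%type >-> (T * T)%type} :=
  HB.pack sw (isMeasurableFun.Build _ _ _ _ _ msw).
exists (distribution pi Sw); split.
  split => A mA.
    by transitivity (pi (snd @^-1` A)); first by []; exact: c2.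
  by transitivity (pi (fst @^-1` A)); first by []; exact: c1.
rewrite ge0_integral_distribution //; last by move=> z; rewrite lee_fin ed_ge0.
  by apply: eq_integral => z _ /=; rewrite ed_sym.
exact: meas_ed.
Qed.

Lemma W1_swap_lt (mu nu : set T -> \bar R) x : W1 mu nu < x -> W1 nu mu < x.
Proof.
move=> /ereal_inf_lt [_ [pi cpi <-] lt].
have [pi' [cpi' eq]] := coupling_swap cpi.
apply: le_lt_trans lt; rewrite -eq; apply: ereal_inf_lbound; by exists pi'.
Qed.
End Ext.

Unset Implicit Arguments.
Theorem corollaryD4 (R : realType) (d n : nat) (Omega : set 'rV[R]_d) (L : R)
  (Gamma : probability (BPt R d n) R -> Pt R d n -> Pt R d n) :
  open Omega -> bounded_set Omega -> 0 < L -> (0 < n)%N ->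
  let X := @Xset R d n Omega L in
  (* Gamma(mu, .) maps X into X *)
  (forall mu, inPX X mu -> forall p, X p -> X (Gamma mu p)) ->
  (* (i) uniform continuity in mu w.r.t. W1 convergence *)
  (forall (mu_ : nat -> probability (BPt R d n) R) (mu : probability (BPt R d n) R),
     (forall j, inPX X (mu_ j)) -> inPX X mu ->
     (forall e : R, 0 < e -> exists N, forall j, (N <= j)%N ->
        (W1 (mu_ j) mu <= e%:E)%E) ->
     forall e : R, 0 < e -> exists N, forall j, (N <= j)%N ->
        forall p, X p -> eucl_dist (Gamma (mu_ j) p) (Gamma mu p) <= e) ->
  (* (ii) uniform Lipschitz bound in (x, y) *)
  (exists C0 : R, 0 < C0 /\
     forall mu, inPX X mu -> forall p1 p2, X p1 -> X p2 ->
       eucl_dist (Gamma mu p1) (Gamma mu p2) <= C0 * (eucl_norm (p1.1 - p2.1) + eucl_norm (p1.2 - p2.2))) ->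
  (* G(mu) = Gamma(mu, .)_# mu is continuous on P(X) for W1 *)
  forall mu, inPX X mu -> forall e : R, 0 < e -> exists2 delta : R, 0 < delta &
    forall nu, inPX X nu -> (W1 mu nu < delta%:E)%E ->
      (W1 (pushforward_on X mu (Gamma mu)) (pushforward_on X nu (Gamma nu)) < e%:E)%E.
Proof.
move=> oO bO L0 n0 X HX Hi [C0 [C0pos Hlip]] mu muX e e0.
have cX : closed X by exact: Xset_closed.
pose K : R := (d + n)%:R.
have K0 : 0 < K by rewrite ltr0n addn_gt0 n0 orbT.
have lipG : forall m, inPX X m -> forall p q, X p -> X q ->
    eucl_dist (Gamma m p) (Gamma m q) <= (C0 * 2) * eucl_dist p q.
  move=> m mX p q Xp Xq; have h := Hlip m mX p q Xp Xq.
  have h1 := en1_le p q; have h2 := en2_le p q; nra.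
have mG : forall m, inPX X m -> measurable_fun (X : set (BPt R d n)) (Gamma m : BPt R d n -> BPt R d n).
  move=> m mX; apply: (lip_meas cX _ (lipG m mX)); nra.
pose s := e / (2 * K).
have s0 : 0 < s by rewrite /s divr_gt0 // mulr_gt0.
have [d1 d1pos Hd1] : exists2 d1 : R, 0 < d1 & forall nu, inPX X nu ->
    (W1 mu nu < d1%:E)%E -> forall p, X p -> eucl_dist (Gamma mu p) (Gamma nu p) <= s.
  apply: contrapT => H.
  have H' : forall j : nat, exists nu, [/\ inPX X nu, (W1 mu nu < (j.+1%:R^-1)%:E)%E &
      exists p, X p /\ s < eucl_dist (Gamma mu p) (Gamma nu p)].
    move=> j; apply: contrapT => Hj; apply: H; exists (j.+1%:R^-1).
      by rewrite invr_gt0 ltr0n.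
    move=> nu nuX lt p Xp; rewrite leNgt; apply/negP => gt; apply: Hj.
    by exists nu; split => //; exists p.
  have [f Hf] := choice H'.
  have fX j : inPX X (f j) by have [] := Hf j.
  have conv : forall e' : R, 0 < e' -> exists N, forall j, (N <= j)%N ->
      (W1 (f j) mu <= e'%:E)%E.
    move=> e' e'0; exists (Num.Def.archi_bound (e'^-1)) => j Nj.
    have [_ lt _] := Hf j; apply/ltW; apply: (W1_swap_lt (lt_le_trans lt _)).
    rewrite lee_fin; apply/ltW; rewrite invf_plt ?posrE ?ltr0n //.
    apply: lt_le_trans (archi_boundP _) _; first by rewrite invr_ge0 ltW.
    by rewrite ler_nat; apply: leq_trans Nj _.
  have [N HN] := Hi f mu fX muX conv s s0.
  have [_ _ [p [Xp gt]]] := Hf N.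
  have := HN N (leqnn N) p Xp; rewrite ed_sym => le.
  by move: (lt_le_trans gt le); rewrite ltxx.
pose c : R := K * (C0 * 2).
have c0 : 0 < c by rewrite /c mulr_gt0 // mulr_gt0.
pose d2 : R := e / (2 * c).
have d2pos : 0 < d2 by rewrite /d2 divr_gt0 // mulr_gt0.
exists (Num.min d1 d2); first by rewrite lt_min d1pos d2pos.
move=> nu nuX Wlt.
have W1d1 : (W1 mu nu < d1%:E)%E.
  by apply: lt_le_trans Wlt _; rewrite lee_fin ge_min lexx.
have close := Hd1 nu nuX W1d1.
have [_ [pi cpi <-] ltpi] := ereal_inf_lt Wlt.
have mE1 := ext_meas cX (mG mu muX).
have mE2 := ext_meas cX (mG nu nuX).
have [pi' [cpi' Eint]] := coupling_push cpi mE1 mE2.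
have cpi'' : coupling (pushforward_on X mu (Gamma mu)) (pushforward_on X nu (Gamma nu)) pi'.
  case: cpi' => c1 c2; split => A mA.
    by rewrite c1 // ext_push //; exact: mG.
  by rewrite c2 // ext_push //; exact: mG.
apply: le_lt_trans; first by apply: ereal_inf_lbound; exists pi'.
rewrite Eint.
pose F := fun z : (BPt R d n * BPt R d n)%type =>
  ((eucl_dist (z.1 : Pt R d n) (z.2 : Pt R d n))%:E : \bar R).
have mF : measurable_fun setT F by exact: meas_ed.
have mFr : measurable_fun [set: (BPt R d n * BPt R d n)%type]
    (fun z : (BPt R d n * BPt R d n)%type => eucl_dist (z.1 : Pt R d n) (z.2 : Pt R d n)).
  exact/measurable_EFinP.
pose Phi := fun z : (BPt R d n * BPt R d n)%type =>
  ((ext X (Gamma mu) z.1 : BPt R d n), (ext X (Gamma nu) z.2 : BPt R d n)) : (BPt R d n * BPt R d n)%type.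
have mPhi : measurable_fun [set: (BPt R d n * BPt R d n)%type] Phi.
  apply: measurable_fun_pair.
    exact: measurableT_comp mE1 measurable_fst.
  exact: measurableT_comp mE2 measurable_snd.
have mFPhi := measurableT_comp mF mPhi.
pose Hr := fun z : (BPt R d n * BPt R d n)%type =>
  K * s + c * eucl_dist (z.1 : Pt R d n) (z.2 : Pt R d n).
have HH : (\int[pi]_z (eucl_dist (ext X (Gamma mu) z.1 : Pt R d n) (ext X (Gamma nu) z.2 : Pt R d n))%:E
   <= \int[pi]_z (Hr z)%:E)%E.
  apply: ae_ge0_le_integral => //.
  - by move=> z _; rewrite lee_fin ed_ge0.
  - move=> z _; rewrite lee_fin; apply: addr_ge0; apply: mulr_ge0.
    + exact: ltW.
    + exact: ltW.
    + exact: ltW.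
    + exact: ed_ge0.
  - apply/measurable_EFinP; apply: measurable_funD => //.
    exact: measurable_funM.
  have mXc : measurable (~` X : set (BPt R d n)) by apply: measurableC; exact: closed_meas.
  have m1 : measurable (fst @^-1` (~` X) : set (BPt R d n * BPt R d n)%type).
    by rewrite -(setTI (fst @^-1` _)); exact: measurable_fst measurableT _ mXc.
  have m2 : measurable (snd @^-1` (~` X) : set (BPt R d n * BPt R d n)%type).
    by rewrite -(setTI (snd @^-1` _)); exact: measurable_snd measurableT _ mXc.
  have mu0 : mu (~` X) = 0%E by rewrite probability_setC ?muX ?subee //; exact: closed_meas.
  have nu0 : nu (~` X) = 0%E by rewrite probability_setC ?nuX ?subee //; exact: closed_meas.
  exists (fst @^-1` (~` X) `|` snd @^-1` (~` X)); split.
  - exact: measurableU.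
  - apply/eqP; rewrite eq_le measure_ge0 andbT.
    apply: le_trans (measureU2 _ m1 m2) _.
    case: cpi => c1 c2.
    rewrite [Y in (Y + _)%E](_ : _ = 0%E); last by rewrite -mu0; exact: c1.
    rewrite [Y in (_ + Y)%E](_ : _ = 0%E); last by rewrite -nu0; exact: c2.
    by rewrite adde0.
  move=> z Hz; apply: contrapT => nN; apply: Hz => _.
  have X1 : X z.1 by apply: contrapT => h; apply: nN; left.
  have X2 : X z.2 by apply: contrapT => h; apply: nN; right.
  rewrite /ext !asboolT // lee_fin /Hr.
  have t := ed_triangle (Gamma mu z.1) (Gamma nu z.1) (Gamma nu z.2).
  have c1 := close z.1 X1.
  have l := lipG nu nuX z.1 z.2 X1 X2.
  apply: le_trans t _; rewrite /c /K mulrDr -mulrA; apply: lerD;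
    by apply: ler_wpM2l => //; exact: ler0n.
apply: le_lt_trans HH _.
have eqI : (\int[pi]_z (Hr z)%:E = (K * s)%:E + c%:E * \int[pi]_z F z)%E.
  rewrite /Hr.
  under eq_integral do rewrite EFinD (EFinM c).
  rewrite ge0_integralD //.
  - rewrite integral_cst // [Y in ((_ * Y) + _)%E](_ : _ = 1%E); last exact: probability_setT.
    rewrite mule1 ge0_integralZl_EFin //.
    + by move=> z _; rewrite lee_fin ed_ge0.
    + exact: ltW.
  - by move=> z _; rewrite lee_fin mulr_ge0 // ltW.
  - by move=> z _; rewrite lee_fin mulr_ge0 ?ed_ge0 // ltW.
  - by apply/measurable_EFinP; apply: measurable_funM.
rewrite eqI.
have I0 : (0 <= \int[pi]_z F z)%E.
  by apply: integral_ge0 => z _; rewrite lee_fin ed_ge0.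
have ltF : (\int[pi]_z F z < (Num.min d1 d2)%:E)%E by exact: ltpi.
move: ltF I0; move: (\int[pi]_z F z)%E => [r| |] //= ltr r0.
rewrite lte_fin in ltr; rewrite lee_fin in r0.
rewrite -EFinM -EFinD lte_fin.
have rd2 : r < d2 by apply: lt_le_trans ltr _; rewrite ge_min lexx orbT.
have Ks : K * s = e / 2.
  by rewrite /s; field; rewrite -natrD; exact: lt0r_neq0 K0.
have cd : c * d2 = e / 2.
  by rewrite /d2; field; exact: lt0r_neq0 c0.
have : c * r < c * d2 by rewrite ltr_pM2l.
lra.
Qed.
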